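(* Let $(G,Y)$ be a $C$-group. Every element $g\in G$ can be written as $g=g_1g_2^{-1}$ with $g_1,g_2$ positive elements; and for such a representation, $g\in[G,G]$ if and only if $\mathrm{ab}(g_1)=\mathrm{ab}(g_2)$. If moreover $(G,Y)$ is a finite $C$-group, then every $g\in G$ has such a representation with $g_2=\alpha_G(s_\Gamma^n)$ for some $n\ge0$ and $g_1=\alpha_G(s_1)$ for some $s_1\in S(G,Y)^G$.
   Context: A $C$-group is a pair $(G,Y)$ with $Y$ a conjugation-invariant subset of the group $G$ consisting of finitely many conjugacy classes, $1\notin Y$, such that $G$ has a presentation with generators the elements of $Y$ and defining relations all of the form $z^{-1}yz=y'$ ($y,y',z\in Y$); it is finite if $Y$ is finite. $\mathrm{ab}:G\to G/[G,G]$ is the abelianization map. The factorization semigroup $S(G,Y)$ is generated by symbols $x_y$, $y\in Y$, subject to $x_{g_1}x_{g_2}=x_{g_2}x_{g_2^{-1}g_1g_2}=x_{g_1g_2g_1^{-1}}x_{g_1}$; $\alpha_G:S(G,Y)\to G$, $x_y\mapsto y$. An element $g\in G$ is positive if $g=\alpha_G(s)$ for some $s\in S(G,Y)$. For $s=x_{g_1}\cdots x_{g_n}$, $G_s$ is the subgroup generated by the $g_j$, and $S(G,Y)^G=\{s:G_s=G\}$. For finite $(G,Y)$: $Y=C_1\sqcup\dots\sqcup C_m$ (conjugacy classes, $C_i=\{y_{i,1},\dots,y_{i,n_i}\}$), $p_i$ the least $p\ge1$ with $y^p$ central for $y\in C_i$, and $s_\Gamma=\prod_{i=1}^m\prod_{j=1}^{n_i}x_{y_{i,j}}^{p_i}$.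 *)

(* Defs.v *)
From mathcomp Require Import all_boot.
From Stdlib Require Import ClassicalEpsilon.

Set Implicit Arguments.
Unset Strict Implicit.
Unset Printing Implicit Defensive.

Local Open Scope group_scope.

Section CGroups.
Variable G : groupType.

Inductive gen (A : G -> Prop) : G -> Prop :=
  | gen_one : gen A 1
  | gen_base x : A x -> gen A x
  | gen_mul x y : gen A x -> gen A y -> gen A (x * y)
  | gen_inv x : gen A x -> gen A x^-1.

Definition is_hom (H : groupType) (phi : G -> H) : Prop :=
  forall a b : G, phi (a * b) = phi a * phi b.

Definition C_group (Y : G -> Prop) : Prop :=
  (forall y z : G, Y y -> Y (y ^ z)) /\
  (* Y consists of finitely many conjugacy classes *)
  (exists r : seq G, (forall y, y \in r -> Y y) /\
      forall y, Y y -> exists2 x, x \in r & exists z : G, y = x ^ z) /\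
  ~ Y 1 /\
  (* G is presented by generators Y and relations z^-1 y z = y' (y,y',z in Y):
     Y generates G and the canonical map <Y | relations> -> G is an
     isomorphism, i.e. G has the universal property of that presentation. *)
  (forall g : G, gen Y g) /\
  (forall (H : groupType) (f : G -> H),
      (forall y z : G, Y y -> Y z -> f (y ^ z) = f y ^ f z) ->
      exists phi : G -> H, is_hom phi /\ forall y, Y y -> phi y = f y).

(* Elements of the factorization semigroup S(G,Y) are represented by words
   x_{g_1} ... x_{g_n} (g_j in Y); all notions below are invariant under the
   defining relations of S(G,Y). *)
Definition word (Y : G -> Prop) (s : seq G) : Prop := forall y, y \in s -> Y y.

Definition alpha (s : seq G) : G := \prod_(y <- s) y.

Definition spow (s : seq G) (n : nat) : seq G := flatten (nseq n s).

Definition positive (Y : G -> Prop) (g : G) : Prop :=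
  exists s, word Y s /\ g = alpha s.

Definition G_s (s : seq G) : G -> Prop := gen (fun g => g \in s).

Definition in_SG (Y : G -> Prop) (s : seq G) : Prop :=
  word Y s /\ forall g : G, G_s s g.

Definition commutator_subgroup : G -> Prop :=
  gen (fun g => exists a b : G, g = [~ a, b]).

(* ab : G -> G/[G,G], g |-> the coset g[G,G] (as a subset of G) *)
Definition ab (g : G) : G -> Prop := fun h => commutator_subgroup (g^-1 * h).

Definition central (x : G) : Prop := forall z : G, x * z = z * x.

Definition cpow (y : G) : nat :=
  epsilon (inhabits 0%N)
    (fun p => (1 <= p)%N /\ central (y ^+ p) /\
       forall q, (1 <= q)%N -> central (y ^+ q) -> (p <= q)%N).

Definition s_Gamma (l : seq G) : seq G := flatten [seq nseq (cpow y) y | y <- l].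

End CGroups.

(* Main.v *)
Require Import Defs.
From mathcomp Require Import all_boot.
From mathcomp Require Import fingroup perm.
From Stdlib Require Import Classical ClassicalEpsilon FunctionalExtensionality PropExtensionality.
Local Open Scope group_scope.

Section Aux.
Variable G : groupType.
Implicit Types (Y : G -> Prop) (s t : seq G).

Lemma alpha_nil : alpha (@nil G) = 1.
Proof. by rewrite /alpha big_nil. Qed.

Lemma alpha_cons (y : G) s : alpha (y :: s) = y * alpha s.
Proof. by rewrite /alpha big_cons. Qed.

Lemma alpha_cat s t : alpha (s ++ t) = alpha s * alpha t.
Proof. by rewrite /alpha big_cat. Qed.

Lemma alpha_nseq n (y : G) : alpha (nseq n y) = y ^+ n.
Proof. by rewrite /alpha big_nseq iter_mulg_1. Qed.

Lemma alpha_conj s (z : G) : alpha (map (fun x => x ^ z) s) = alpha s ^ z.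
Proof.
elim: s => [|x s IH]; first by rewrite /= !alpha_nil conj1g.
by rewrite /= !alpha_cons IH conjMg.
Qed.

Lemma alpha_spow s n : alpha (spow s n) = alpha s ^+ n.
Proof.
elim: n => [|n IH]; first by rewrite /spow /= alpha_nil.
by rewrite /spow /= alpha_cat -/(spow s n) IH expgS.
Qed.

Lemma word_cat Y s t : word Y s -> word Y t -> word Y (s ++ t).
Proof. by move=> Hs Ht y; rewrite mem_cat => /orP [/Hs|/Ht]. Qed.

Lemma gen_mono (A B : G -> Prop) g : (forall x, A x -> B x) -> gen A g -> gen B g.
Proof.
move=> AB; elim=> [|x /AB|x y _ Hx _ Hy|x _ Hx]; by constructor.
Qed.

Lemma part1 Y : (forall y z : G, Y y -> Y (y ^ z)) ->
  forall g, gen Y g -> exists s t, word Y s /\ word Y t /\ g = alpha s * (alpha t)^-1.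
Proof.
move=> Yc g; elim.
- exists [::], [::]; split; [by []|split; [by []|]].
  by rewrite alpha_nil invg1 mulg1.
- move=> x Yx; exists [:: x], [::]; split; [|split; [by []|]].
  + by move=> y; rewrite inE => /eqP ->.
  + by rewrite alpha_cons alpha_nil invg1 !mulg1.
- move=> x y _ [a [b [Ha [Hb ->]]]] _ [c [d [Hc [Hd ->]]]].
  exists (a ++ map (fun u => u ^ alpha b) c), (d ++ b); split; [|split].
  + apply: word_cat => // u /mapP [v /Hc Hv ->]; exact: Yc.
  + exact: word_cat.
  + rewrite !alpha_cat alpha_conj conjgE invMg !mulgA.
    by rewrite mulgK.
- move=> x _ [a [b [Ha [Hb ->]]]]; exists b, a; split; [by []|split; [by []|]].
  by rewrite invMg invgK.
Qed.

Lemma comm_conj (x z : G) : commutator_subgroup x -> commutator_subgroup (x ^ z).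
Proof.
elim=> [|u [a [b ->]]|u v _ Hu _ Hv|u _ Hu].
- rewrite conj1g; exact: gen_one.
- apply: gen_base; exists (a ^ z), (b ^ z); exact: conjRg.
- rewrite conjMg; exact: gen_mul.
- rewrite conjVg; exact: gen_inv.
Qed.

Lemma part2 (g g1 g2 : G) : g = g1 * g2^-1 ->
  (commutator_subgroup g <-> ab g1 = ab g2).
Proof.
move=> ->; split.
- move=> Hg; apply: functional_extensionality => h.
  apply: propositional_extensionality; rewrite /ab; split => H.
  + have -> : g2^-1 * h = ((g1 * g2^-1) ^ g2) * (g1^-1 * h).
      by rewrite conjgE !mulgA mulgKV mulgK.
    apply: gen_mul => //; exact: comm_conj.
  + have -> : g1^-1 * h = ((g1 * g2^-1)^-1 ^ g2) * (g2^-1 * h).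
      by rewrite conjgE invMg invgK !mulgA mulgK mulVg mul1g.
    apply: gen_mul => //; apply: comm_conj; exact: gen_inv.
- move=> E.
  have H : ab g2 g2 by rewrite /ab mulVg; exact: gen_one.
  rewrite -E /ab in H.
  have -> : g1 * g2^-1 = (g1^-1 * g2)^-1 ^ g1^-1.
    by rewrite conjgE invMg !invgK !mulgA mulgK.
  apply: comm_conj; exact: gen_inv.
Qed.

Lemma min_exists (P : nat -> Prop) : (exists n, P n) ->
  exists n, P n /\ forall m, P m -> n <= m.
Proof.
move=> [n Pn].
suff: forall N n, n <= N -> P n -> exists n, P n /\ forall m, P m -> n <= m.
  by move/(_ n n (leqnn n) Pn).
elim=> [|N IH] k.
- rewrite leqn0 => /eqP -> P0; exists 0; split => // m _.
- move=> HkN Pk.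
  case: (classic (exists j, j < k /\ P j)) => [[j [Hj Pj]]|Hno].
  + apply: (IH j) => //; rewrite -ltnS; exact: leq_trans Hj HkN.
  + exists k; split => // m Pm; rewrite leqNgt; apply/negP => Hmk.
    by apply: Hno; exists m.
Qed.

Lemma central_gen Y (x : G) : (forall g, gen Y g) ->
  (forall y, Y y -> commute x y) -> central x.
Proof.
move=> Hg Hc z; move: (Hg z); elim=> [|u /Hc|u v _ Hu _ Hv|u _ Hu] //.
- by rewrite mulg1 mul1g.
- exact: commuteM.
- exact: commuteV.
Qed.

Lemma cpow_spec Y (l : seq G) (y : G) :
  (forall y z : G, Y y -> Y (y ^ z)) -> (forall g, gen Y g) ->
  (forall y, Y y <-> y \in l) -> y \in l ->
  1 <= cpow y /\ central (y ^+ cpow y).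
Proof.
move=> Yc Hg Hl yl.
have cl : forall x : seq_sub l, ssval x ^ y \in l.
  by move=> [x xl] /=; apply/Hl/Yc/Hl.
pose sig := fun x : seq_sub l => SeqSub (cl x).
have sig_inj : injective sig.
  move=> [a al] [b bl] [] /conjg_inj E; move: al bl; rewrite E => al bl.
  by rewrite (bool_irrelevance al bl).
pose p := perm sig_inj.
have iterE : forall n x, ssval (iter n sig x) = ssval x ^ (y ^+ n).
  elim=> [|n IH] x; first by rewrite /= conjg1.
  by rewrite iterS /= IH -conjgM -expgSr.
have ex : exists k, (1 <= k /\ central (y ^+ k)).
  exists #[p]; split; first exact: order_gt0.
  apply: (central_gen _ _ Hg) => z /Hl zl.
  have := iterE #[p] (SeqSub zl).
  have -> : iter #[p] sig (SeqSub zl) = SeqSub zl.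
    have := permX p (SeqSub zl) #[p]; rewrite expg_order perm1.
    have -> : iter #[p] p (SeqSub zl) = iter #[p] sig (SeqSub zl).
      by apply: eq_iter => x; rewrite permE.
    by move=> <-.
  move=> /= /esym /conjg_fixP /commgP; exact: commute_sym.
have [m [Pm Hm]] := min_exists _ ex.
have := @epsilon_spec nat (inhabits 0%N)
  (fun p => (1 <= p)%N /\ central (y ^+ p) /\
       forall q, (1 <= q)%N -> central (y ^+ q) -> (p <= q)%N).
rewrite /cpow => H; case: H => [|H1 [H2 _]] //.
exists m; split; [by case: Pm|split; [by case: Pm|]].
by move=> q q1 cq; apply: Hm.
Qed.


Lemma central1 : @central G 1.
Proof. by move=> z; rewrite mulg1 mul1g. Qed.

Lemma centralM (a b : G) : central a -> central b -> central (a * b).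
Proof. by move=> Ha Hb z; rewrite -mulgA (Hb z) mulgA (Ha z) -mulgA. Qed.

Lemma sGamma_cons (y : G) m : s_Gamma (y :: m) = nseq (cpow y) y ++ s_Gamma m.
Proof. by []. Qed.

Lemma central_sGamma (m : seq G) :
  (forall y, y \in m -> 1 <= cpow y /\ central (y ^+ cpow y)) ->
  central (alpha (s_Gamma m)).
Proof.
elim: m => [|y m IH] H; first by rewrite /s_Gamma /= alpha_nil; exact: central1.
rewrite sGamma_cons alpha_cat alpha_nseq; apply: centralM.
- by case: (H y (mem_head _ _)).
- by apply: IH => z zm; apply: H; rewrite inE zm orbT.
Qed.

Lemma letters_sGamma (m : seq G) x : x \in s_Gamma m -> x \in m.
Proof.
elim: m => [|y m IH] //; rewrite sGamma_cons mem_cat mem_nseq inE.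
case/orP => [/andP [_ ->] //|/IH ->]; by rewrite orbT.
Qed.

Lemma in_sGamma (m : seq G) y : y \in m -> 1 <= cpow y -> y \in s_Gamma m.
Proof.
elim: m => [|z m IH] //; rewrite inE sGamma_cons mem_cat => /orP [/eqP ->|ym] c1.
- by rewrite mem_nseq c1 eqxx.
- by rewrite IH ?orbT.
Qed.

Lemma invsGamma (m : seq G) y :
  (forall y, y \in m -> 1 <= cpow y /\ central (y ^+ cpow y)) -> y \in m ->
  exists h, (forall x, x \in h -> x \in m) /\ y^-1 * alpha (s_Gamma m) = alpha h.
Proof.
elim: m => [|z m IH] // H; rewrite inE.
have Hz := H z (mem_head _ _).
have H' : forall y, y \in m -> 1 <= cpow y /\ central (y ^+ cpow y).
  by move=> u um; apply: H; rewrite inE um orbT.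
case: (eqVneq y z) => [->|_] /= ym.
- exists (nseq (cpow z).-1 z ++ s_Gamma m); split.
  + move=> x; rewrite mem_cat mem_nseq inE => /orP [/andP [_ ->] //|/letters_sGamma ->].
    by rewrite orbT.
  + rewrite sGamma_cons !alpha_cat !alpha_nseq mulgA; congr (_ * _).
    case: Hz; case: (cpow z) => // n _ _; by rewrite expgS mulKg.
- have [h [Hh E]] := IH H' ym.
  exists (nseq (cpow z) z ++ h); split.
  + move=> x; rewrite mem_cat mem_nseq inE => /orP [/andP [_ ->] //|/Hh ->].
    by rewrite orbT.
  + rewrite sGamma_cons !alpha_cat alpha_nseq -E mulgA.
    case: Hz => _ Hc; by rewrite -Hc mulgA.
Qed.


Lemma invpos Y (c : G) : central c ->
  (forall y, Y y -> exists h, word Y h /\ y^-1 * c = alpha h) ->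
  forall t, word Y t -> exists n h, word Y h /\ (alpha t)^-1 * c ^+ n = alpha h.
Proof.
move=> Hc Hy; elim=> [|y t IH] Ht.
- exists 0, [::]; split => //; by rewrite alpha_nil invg1 mulg1.
- have [n [h [Hh E]]] : exists n h, word Y h /\ (alpha t)^-1 * c ^+ n = alpha h.
    by apply: IH => x xt; apply: Ht; rewrite inE xt orbT.
  have [h' [Hh' E']] := Hy y (Ht y (mem_head _ _)).
  exists n.+1, (h ++ h'); split; first exact: word_cat.
  have cn : central (c ^+ n).
    elim: n {E} => [|k IHk]; first exact: central1.
    by rewrite expgS; apply: centralM.
  rewrite alpha_cons alpha_cat -E -E' expgS invMg.
  by rewrite -!mulgA; congr (_ * _); rewrite (cn (y^-1 * c)) !mulgA.
Qed.

End Aux.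

Theorem lemma2p18 (G : groupType) (Y : G -> Prop) :
  C_group Y ->
  (forall g : G, exists g1 g2 : G,
      positive Y g1 /\ positive Y g2 /\ g = g1 * g2^-1) /\
  (forall g g1 g2 : G, positive Y g1 -> positive Y g2 -> g = g1 * g2^-1 ->
      (commutator_subgroup g <-> ab g1 = ab g2)) /\
  (* finite case: l is an enumeration (without repetition) of the finite Y *)
  (forall l : seq G, uniq l -> (forall y, Y y <-> y \in l) ->
     forall g : G, exists (n : nat) (s1 : seq G),
       in_SG Y s1 /\ g = alpha s1 * (alpha (spow (s_Gamma l) n))^-1).
Proof.
move=> [Yc [_ [_ [Hg _]]]].
split.
  move=> g; have [s [t [Hs [Ht E]]]] := @part1 G Y Yc g (Hg g).
  by exists (alpha s), (alpha t); split; [exists s|split; [exists t|]].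
split.
  by move=> g g1 g2 _ _; exact: part2.
move=> l _ Hl g.
have Hp : forall y, y \in l -> 1 <= cpow y /\ central (y ^+ cpow y).
  by move=> y yl; exact: (@cpow_spec G Y l y Yc Hg Hl yl).
set c := alpha (s_Gamma l).
have Hc : central c by exact: (@central_sGamma G l Hp).
have Hwl : forall h, (forall x, x \in h -> x \in l) -> word Y h.
  by move=> h H x /H /Hl.
have [s [t [Hs [Ht E]]]] := @part1 G Y Yc g (Hg g).
have [n [h [Hh Eh]]] : exists n h, word Y h /\ (alpha t)^-1 * c ^+ n = alpha h.
  apply: (@invpos G Y c Hc) => // y /Hl yl.
  have [h [H1 H2]] := @invsGamma G l y Hp yl.
  by exists h; split => //; apply: Hwl.
exists n.+1, (s ++ h ++ s_Gamma l); split.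
  split.
    apply: word_cat => //; apply: word_cat => //.
    by apply: Hwl => x /letters_sGamma.
  move=> z; apply: (@gen_mono G Y _ z _ (Hg z)) => y /Hl yl.
  rewrite !mem_cat in_sGamma ?orbT //; by case: (Hp y yl).
rewrite alpha_spow -/c !alpha_cat -Eh E expgSr invMg !mulgA mulgK.
by rewrite mulgK.
Qed.
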